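(* Let $X$ be a nondegenerate random variable with CDF $F$ such that $\mathbb{E}(\min\{X,X'\})$ and $\mathbb{E}(\max\{X,X'\})$ are finite, where $X'$ is an independent copy of $X$. Let $T$ be an absolutely continuous random variable with CDF $F_T$ and the same support as $X$, and let $q_1(u)=q_2(u)=u$, $0\le u\le1$. Then $$\hat G_X(\mathbf q,F_T)=\frac12\,\mathbb{E}\left[F_T(\max\{X,X'\})-F_T(\min\{X,X'\})\right].$$
   Context: The weighted $\mathbf q$-distorted Gini function of $X$ (CDF $F$, survival $\overline F=1-F$), for distortion functions $q_1,q_2$ (increasing maps $[0,1]\to[0,1]$ fixing $0$ and $1$), is $\hat G_X(\mathbf q,F_T)=\int_\Delta q_1(F(x))\,q_2(\overline F(x))\,dF_T(x)$, where $\Delta$ is the non-empty intersection of the supports of $X$ and $T$. *)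

(* Defs.v *)
From HB Require Import structures.
From mathcomp Require Import all_boot all_order all_algebra.
From mathcomp Require Import all_classical all_reals all_analysis.
Set Implicit Arguments. Unset Strict Implicit. Unset Printing Implicit Defensive.
Import Order.TTheory GRing.Theory Num.Theory.
Import numFieldNormedType.Exports.
Local Open Scope classical_set_scope.
Local Open Scope ring_scope.

Definition msupp (R : realType) (mu : set R -> \bar R) : set R :=
  [set x | forall e : R, 0 < e -> (0 < mu (ball x e))%E].

Definition rcdf d (Omega : measurableType d) (R : realType)
  (P : probability Omega R) (X : {RV P >-> R}) (x : R) : R := fine (cdf X x).

Definition indep2 d (Omega : measurableType d) (R : realType)
  (P : probability Omega R) (X Y : {RV P >-> R}) : Prop :=
  forall A B : set R, measurable A -> measurable B ->
    P (X @^-1` A `&` Y @^-1` B) = (P (X @^-1` A) * P (Y @^-1` B))%E.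

Definition same_law d (Omega : measurableType d) (R : realType)
  (P : probability Omega R) (X Y : {RV P >-> R}) : Prop :=
  forall A : set R, measurable A -> P (X @^-1` A) = P (Y @^-1` A).

Definition nondegenerate_rv d (Omega : measurableType d) (R : realType)
  (P : probability Omega R) (X : {RV P >-> R}) : Prop :=
  ~ exists c : R, P (X @^-1` [set c]) = 1%E.

Definition gDelta d (Omega : measurableType d) (R : realType)
  (P : probability Omega R) (X T : {RV P >-> R}) : set R :=
  msupp (distribution P X) `&` msupp (distribution P T).

(* Weighted q-distorted Gini function
   \hat G_X(q, F_T) = \int_Delta q1(F(x)) q2(\bar F(x)) dF_T(x),
   the Lebesgue-Stieltjes integral dF_T being integration w.r.t. the law of T. *)
Definition Ghat d (Omega : measurableType d) (R : realType)
  (P : probability Omega R) (q1 q2 : R -> R) (X T : {RV P >-> R}) : \bar R :=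
  (\int[distribution P T]_(x in gDelta X T)
     (q1 (rcdf X x) * q2 (1 - rcdf X x))%:E)%E.

(* Main.v *)
Require Import Defs.
From HB Require Import structures.
From mathcomp Require Import all_boot all_order all_algebra.
From mathcomp Require Import all_classical all_reals all_analysis.
From mathcomp Require Import measurable_realfun ring lra.
Import Order.TTheory GRing.Theory Num.Theory.
Import numFieldNormedType.Exports.
Local Open Scope classical_set_scope.
Local Open Scope ring_scope.
Section Aux.
Local Open Scope ereal_scope.
Lemma exists_natinv (R : realType) (e : R) : (0 < e)%R -> exists k : nat, (k.+1%:R^-1 < e)%R.
Proof.
move=> e0.
have [N _ HN] := near_infty_natSinv_lt (PosNum e0).
by exists N; apply: HN => /=.
Qed.

Section supp.
Variables (R : realType) (mu : {measure set R -> \bar R}).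

Let r (k : nat) : R := (k.+1%:R^-1)%R.
Let B (n : nat) : set R :=
  match (unpickle n : option (rat * nat)) with
  | Some (q, k) => if mu (ball (ratr q : R) (r k)) == 0 then ball (ratr q : R) (r k) else set0
  | None => set0 end.

Let mB n : measurable (B n).
Proof. rewrite /B; case: unpickle => [[q k]|//]; case: ifP => // _; exact: measurable_ball. Qed.

Let muB n : mu (B n) = 0.
Proof. rewrite /B; case: unpickle => [[q k]|]; last exact: measure0.
by case: ifP => [/eqP//|_]; exact: measure0. Qed.

Let r_gt0 k : (0 < r k)%R. Proof. by rewrite /r invr_gt0. Qed.

Let suppE : ~` msupp mu = \bigcup_n B n.
Proof.
apply/seteqP; split => x.
- move=> /= /existsNP [e /not_implyP [e0 /negP]]; rewrite -leNgt => mue.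
  have mue0 : mu (ball x e) = 0 by apply/eqP; rewrite eq_le mue measure_ge0.
  have [k hk] := @exists_natinv _ _ (divr_gt0 e0 (ltr0Sn R 1)).
  have hxr : (x - r k < x + r k)%R.
    by rewrite ltrBlDr -addrA ltrDl addr_gt0.
  have [q] := rat_in_itvoo hxr; rewrite in_itv /= => /andP[q1 q2].
  have hqx : (`|x - ratr q| < r k)%R by rewrite ltr_distlC q1 q2.
  exists (pickle (q, k)); first exact: I.
  have sub : ball (ratr q : R) (r k) `<=` ball x e.
    move=> y; rewrite -!ball_normE /= => hy.
    apply: le_lt_trans (ler_distD (ratr q : R) x y) _.
    have h1 : (`|x - ratr q| < e / 2)%R by exact: (lt_trans hqx hk).
    have h2 : (`|ratr q - y| < e / 2)%R by exact: (lt_trans hy hk).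
    by rewrite (splitr e); exact: (ltrD h1 h2).
  rewrite /B pickleK.
  have -> : mu (ball (ratr q : R) (r k)) == 0.
    by rewrite eq_le measure_ge0 andbT -mue0 le_measure // inE; exact: measurable_ball.
  by rewrite -ball_normE /= distrC.
- case=> n _; rewrite /B; case: unpickle => [[q k]|//]; case: ifPn => [/eqP mu0 hx|//].
  move=> /(_ (r k - `|ratr q - x|)%R); rewrite -ball_normE /= in hx.
  rewrite subr_gt0 hx => /(_ isT); rewrite lt_neqAle => /andP [+ _] ; apply/negP/negPn/eqP.
  apply/esym/eqP; rewrite eq_le measure_ge0 andbT -mu0 le_measure ?inE //; try exact: measurable_ball.
  move=> y; rewrite -!ball_normE /= => hy.
  apply: le_lt_trans (ler_distD x (ratr q : R) y) _.
  by rewrite -ltrBrDl.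
Qed.

Lemma msupp_measurable : measurable (msupp mu).
Proof.
rewrite -[msupp mu]setCK suppE; apply: measurableC.
exact: bigcupT_measurable.
Qed.

Lemma msupp_null : mu (~` msupp mu) = 0.
Proof.
apply/eqP; rewrite eq_le measure_ge0 andbT suppE.
have h : mu (\bigcup_n B n) <= \sum_(0 <= n <oo) mu (B n).
  by apply: measure_sigma_subadditive => //; exact: bigcupT_measurable.
apply: le_trans h _; rewrite eseries0 //; move=> i _ _; exact: muB.
Qed.
End supp.
Lemma itv_gen (R : realType) (mu : probability R R) a b : (a <= b)%R ->
  (forall x, mu [set x] = 0) ->
  mu `[a, b[%classic = (fine (mu `]-oo, b]%classic) - fine (mu `]-oo, a]%classic))%:E.
Proof.
move=> ab pt.
have hc x : mu `]-oo, x]%classic = (fine (mu `]-oo, x]%classic))%:E.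
  by rewrite fineK // fin_num_measure.
have ho x : mu `]-oo, x[%classic = (fine (mu `]-oo, x]%classic))%:E.
  rewrite -hc -(setDitv1r _ _ false) measureD //; last first.
    by rewrite (le_lt_trans (probability_le1 _ _)) // ?ltry //; exact: measurable_itv.
  rewrite [X in _ - X](_ : _ = 0) ?sube0 //.
  apply/eqP; rewrite eq_le measure_ge0 andbT -(pt x) le_measure // ?inE //.
  exact: measurableI.
transitivity (mu (`]-oo, b[%classic `\` `]-oo, a[%classic)).
  congr (mu _).
  apply/seteqP; split => x /=; rewrite !in_itv /=.
  - by move=> /andP[h1 h2]; split => //; apply/negP; rewrite -leNgt.
  - by move=> [h1 /negP]; rewrite -leNgt h1 => ->.
rewrite measureD //; last first.
  by rewrite (le_lt_trans (probability_le1 _ _)) // ?ltry //; exact: measurable_itv.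
have -> : `]-oo, b[%classic `&` `]-oo, a[%classic = `]-oo, a[%classic.
  apply/seteqP; split => x /=; rewrite !in_itv /=; first by case.
  by move=> h; split => //; exact: lt_le_trans h ab.
by rewrite EFinB -!ho.
Qed.

Section prob.
Context d (Omega : measurableType d) (R : realType) (P : probability Omega R).

Lemma preim_meas (X : {RV P >-> R}) (A : set R) : measurable A -> measurable (X @^-1` A).
Proof. exact: measurable_funPTI. Qed.

Lemma rcdfE (X : {RV P >-> R}) t : P (X @^-1` `]-oo, t]) = (rcdf X t)%:E.
Proof. by rewrite /rcdf /cdf fineK // fin_num_measure //; exact: preim_meas. Qed.

Lemma rcdf_ge0 (X : {RV P >-> R}) t : (0 <= rcdf X t)%R.
Proof. by rewrite -lee_fin -rcdfE. Qed.
Lemma rcdf_le1 (X : {RV P >-> R}) t : (rcdf X t <= 1)%R.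
Proof. by rewrite -lee_fin -rcdfE probability_le1 //; exact: preim_meas. Qed.

Lemma key (X X' : {RV P >-> R}) t : indep2 X X' -> same_law X X' ->
  P [set w | (Num.min (X w) (X' w) <= t < Num.max (X w) (X' w))%R] =
  (2 * (rcdf X t * (1 - rcdf X t)))%:E.
Proof.
move=> hind hlaw.
set I := `]-oo, t]%classic.
have mI : measurable I by exact: measurable_itv.
have mIC : measurable (~` I) by exact: measurableC.
have -> : [set w | (Num.min (X w) (X' w) <= t < Num.max (X w) (X' w))%R] =
  (X @^-1` I `&` X' @^-1` (~` I)) `|` (X @^-1` (~` I) `&` X' @^-1` I).
  apply/seteqP; split => w /=; rewrite /I /= !in_itv /= ge_min lt_max;
    case: (leP (X w) t); case: (leP (X' w) t) => //=.
  - by move=> *; left.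
  - by move=> *; right.
  - by move=> _ _ [[_ H]|[H _]]; exfalso; exact: H.
  - by move=> _ _ [[]|[]].
have mXI := @preim_meas X _ mI; have mXIC := @preim_meas X _ mIC.
have mX'I := @preim_meas X' _ mI; have mX'IC := @preim_meas X' _ mIC.
have h1 := hind _ _ mI mIC; have h2 := hind _ _ mIC mI.
have h3 := hlaw _ mI; have h4 := hlaw _ mIC.
have hU : P ((X @^-1` I `&` X' @^-1` (~` I)) `|` (X @^-1` (~` I) `&` X' @^-1` I)) =
   P (X @^-1` I `&` X' @^-1` (~` I)) + P (X @^-1` (~` I) `&` X' @^-1` I).
  rewrite measureU //; first last.
  - apply/seteqP; split => w //= [[a _] [b _]]; exact: b a.
  - exact: measurableI.
  - exact: measurableI.
rewrite hU h1 h2 -h3 -h4.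
rewrite !preimage_setC !probability_setC // rcdfE.
rewrite -!EFinB -!EFinM -EFinD; congr EFin; ring.
Qed.


Lemma itv_meas (T : {RV P >-> R}) a b : (a <= b)%R ->
  distribution P T `<< (@lebesgue_measure R) ->
  distribution P T `[a, b[%classic = (rcdf T b - rcdf T a)%:E.
Proof.
move=> ab hac; apply: itv_gen => // x.
by apply: (proj1 (null_content_dominatesP _ _) hac) => //; exact: lebesgue_measure_set1.
Qed.

Lemma mrcdf (X : {RV P >-> R}) : measurable_fun setT (rcdf X).
Proof.
apply: nondecreasing_measurable; first exact: measurableT.
move=> r s rs.
by rewrite /rcdf fine_le ?fin_num_measure // cdf_nondecreasing.
Qed.

Lemma mX (X : {RV P >-> R}) : measurable_fun setT X.
Proof. exact: measurable_funP. Qed.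

Lemma main (X X' T : {RV P >-> R}) : indep2 X X' -> same_law X X' ->
  distribution P T `<< (@lebesgue_measure R) ->
  'E_P[fun w => (rcdf T (Num.max (X w) (X' w)) - rcdf T (Num.min (X w) (X' w)))%R] =
  2%:E * \int[distribution P T]_t (rcdf X t * (1 - rcdf X t))%:E.
Proof.
move=> hind hlaw hac.
set mn := fun w => Num.min (X w) (X' w).
set mx := fun w => Num.max (X w) (X' w).
have mmn : measurable_fun setT mn by apply: measurable_minr; exact: mX.
have mmx : measurable_fun setT mx by apply: measurable_maxr; exact: mX.
pose S := [set z : Omega * R | (mn z.1 <= z.2)%R] `&` [set z | (z.2 < mx z.1)%R].
have mS : measurable S.
  apply: measurableI.
  - have h := measurable_fun_ler (measurableT_comp mmn measurable_fst) measurable_snd.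
    have := h measurableT [set true] I; rewrite setTI.
    by congr measurable; apply/seteqP; split => z /=.
  - have h := measurable_fun_ltr measurable_snd (measurableT_comp mmx measurable_fst).
    have := h measurableT [set true] I; rewrite setTI.
    by congr measurable; apply/seteqP; split => z /=.
pose g := fun z => (\1_S z)%:E : \bar R.
have mg : measurable_fun setT g by apply/measurable_EFinP; exact: measurable_indic.
have g0 z : 0 <= g z by rewrite lee_fin indicE.
transitivity (\int[P]_w \int[distribution P T]_t g (w, t)).
  rewrite unlock; apply: eq_integral => w _.
  have hmm : (mn w <= mx w)%R by rewrite /mn /mx ge_min !le_max lexx.
  rewrite -itv_meas //.
  have hi := integral_indic (distribution P T) measurableT (measurable_itv `[mn w, mx w[).
  rewrite setIT in hi; apply: eq_trans (esym hi) _.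
  apply: eq_integral => t _; rewrite /g !indicE; congr (_%:R)%:E.
  congr nat_of_bool.
  apply/idP/idP => /set_mem h; apply/mem_set; move: h => /=; rewrite in_itv /=.
  - by move=> /andP[h1 h2].
  - by case=> h1 h2; apply/andP.
rewrite (fubini_tonelli g mg g0).
have mF : measurable_fun setT (fun t => (rcdf X t * (1 - rcdf X t))%:E).
  apply/measurable_EFinP; apply: measurable_funM => //.
    exact: mrcdf.
  apply: measurable_funB => //.
  exact: mrcdf.
rewrite -ge0_integralZl //; last first.
  by move=> t _; rewrite lee_fin mulr_ge0 ?rcdf_ge0 // subr_ge0 rcdf_le1.
apply: eq_integral => t _.
pose St := [set w | (Num.min (X w) (X' w) <= t < Num.max (X w) (X' w))%R].
have mSt : measurable St.
  have -> : St = [set w | (mn w <= t)%R] `&` [set w | (t < mx w)%R].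
    by apply/seteqP; split => w /= => [/andP[]|[h1 h2]]; last apply/andP.
  apply: measurableI.
  - have h := measurable_fun_ler mmn (measurable_cst t).
    have := h measurableT [set true] I; rewrite setTI.
    by congr measurable; apply/seteqP; split => z /=.
  - have h := measurable_fun_ltr (measurable_cst t) mmx.
    have := h measurableT [set true] I; rewrite setTI.
    by congr measurable; apply/seteqP; split => z /=.
have hi := integral_indic P measurableT mSt.
rewrite setIT in hi.
rewrite -EFinM -(@key X X' t hind hlaw); apply: eq_trans _ hi; apply: eq_integral => w _.
rewrite /g !indicE; congr (_%:R)%:E; congr nat_of_bool.
by apply/idP/idP => /set_mem h; apply/mem_set; move: h => /=; [case=> /= h1 h2; apply/andP | move=> /andP[]].
Qed.
End prob.
End Aux.

Theorem proposition12 (d : measure_display) (Omega : measurableType d)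
  (R : realType) (P : probability Omega R) (X X' T : {RV P >-> R}) :
  nondegenerate_rv X ->
  indep2 X X' -> same_law X X' ->
  ('E_P[fun w => Num.min (X w) (X' w)] \is a fin_num)%E ->
  ('E_P[fun w => Num.max (X w) (X' w)] \is a fin_num)%E ->
  distribution P T `<< (@lebesgue_measure R) ->
  msupp (distribution P T) = msupp (distribution P X) ->
  Ghat (fun u => u) (fun u => u) X T =
  ((2^-1)%:E *
   'E_P[fun w => (rcdf T (Num.max (X w) (X' w)) - rcdf T (Num.min (X w) (X' w)))%R])%E.
Proof.
move=> _ hind hlaw _ _ hac hsupp.
rewrite (@main _ _ _ P X X' T hind hlaw hac).
rewrite muleA -EFinM mulVf // mul1e.
rewrite /Ghat /gDelta -hsupp setIid.
have mF : measurable_fun setT (fun t => (rcdf X t * (1 - rcdf X t))%:E).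
  apply/measurable_EFinP; apply: measurable_funM => //; first exact: mrcdf.
  by apply: measurable_funB => //; exact: mrcdf.
rewrite [RHS](ge0_negligible_integral _ _ _ _ (@msupp_null _ (distribution P T))) //.
- by rewrite setTD setCK.
- by apply: measurableC; exact: (@msupp_measurable _ (distribution P T)).
- by move=> t _; rewrite lee_fin mulr_ge0 ?rcdf_ge0 // subr_ge0 rcdf_le1.
Qed.
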